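(* For every $\varepsilon>0$ and $K>0$ there exists a constant $C$ depending only on $\varepsilon$ and $K$ such that for any two real random variables $W_1,W_2$ with $\mathbb{E}(|W_1|^2+|W_2|^2)\le K$, $$\mathbb{E}\Big(\log\big(xe^{W_1}+e^{W_2}\big)\Big)^2\le(\log x)^2+2(\varepsilon+\mathbb{E}W_1)\log x+C$$ for every $x\ge1$. *)

(* Defs.v *)
From HB Require Import structures.
From mathcomp Require Import all_boot all_order all_algebra.
From mathcomp Require Import all_classical all_reals all_analysis.

(* Main.v *)
Require Import Defs.
From HB Require Import structures.
From mathcomp Require Import all_boot all_order all_algebra.
From mathcomp Require Import all_classical all_reals all_analysis.
From mathcomp Require Import ring lra measurable_realfun.
Import Order.TTheory GRing.Theory Num.Theory.
Local Open Scope ring_scope.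

Lemma pw (R : realType) (a w1 w2 : R) : 0 <= a ->
  ln (expR a * expR w1 + expR w2) ^+ 2 <=
  a ^+ 2 + 2 * a * w1 + 6 + 22 * (`|w1| ^+ 2 + `|w2| ^+ 2).
Proof.
move=> a0.
set s := w2 - w1. set t := s - a. set g := ln (1 + expR t).
have et := expR_gt0 t.
have E1 : expR a * expR w1 + expR w2 = expR (a + w1) * (1 + expR t).
  rewrite mulrDr mulr1 -!expRD.
  have -> : a + w1 + t = w2 by rewrite /t /s; ring.
  by [].
have E2 : ln (expR a * expR w1 + expR w2) = a + w1 + g.
  by rewrite E1 lnM ?expRK // posrE ?expR_gt0 //; lra.
have g0 : 0 <= g by apply: ln_ge0; lra.
have g1 : g <= expR t by apply: le_ln1Dx; lra.
have e2 : 2 <= expR 1 :> R by have := expR_ge1Dx (1 : R); lra.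
have g2 : g <= 1 + `|s|.
  rewrite -[leRHS]expRK /g ler_ln ?posrE ?expR_gt0 //.
  rewrite [expR (1 + _)]expRD.
  have h1 : expR t <= expR `|s| by rewrite ler_expR /t; have := ler_norm s; lra.
  have h2 : 1 <= expR `|s| by have := expR_ge1Dx `|s|; have := normr_ge0 s; lra.
  have h3 : 0 <= (expR 1 - 2) * expR `|s| by apply: mulr_ge0; lra.
  nra.
have g3 : a * g <= 1 + 3 * s ^+ 2.
  have [sa|sa] := leP s (a / 2).
    have h1 : a <= expR (a / 2).
      have -> : a / 2 = a / 4 + a / 4 by field.
      rewrite expRD; have h := expR_ge1Dx (a / 4).
      have h' : 0 <= (expR (a / 4) - (1 + a / 4)) * (expR (a / 4) + (1 + a / 4)).
        by apply: mulr_ge0; lra.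
      have h'' : 0 <= (1 - a / 4) ^+ 2 := sqr_ge0 _.
      nra.
    have h2 : expR (a / 2) * expR t <= 1 by rewrite -expRD expR_le1 /t; lra.
    have k1 : 0 <= a * (expR t - g) by apply: mulr_ge0; lra.
    have k2 : 0 <= (expR (a / 2) - a) * expR t by apply: mulr_ge0; lra.
    have := sqr_ge0 s; nra.
  have ns : `|s| = s by apply: ger0_norm; lra.
  rewrite ns in g2.
  have k1 : 0 <= a * (1 + s - g) by apply: mulr_ge0; lra.
  have k2 : 0 <= (2 * s - a) * (1 + s) by apply: mulr_ge0; lra.
  have k3 : 0 <= (s - 1) ^+ 2 := sqr_ge0 _.
  nra.
rewrite E2 (real_normK (num_real w1)) (real_normK (num_real w2)).
have ns2 : `|s| ^+ 2 = s ^+ 2 := real_normK (num_real s).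
have hs : 0 <= `|s| := normr_ge0 s.
have gg : g ^+ 2 <= (1 + `|s|) ^+ 2.
  have k : 0 <= (1 + `|s| - g) * (1 + `|s| + g) by apply: mulr_ge0; lra.
  nra.
have k4 : 0 <= (w1 - g) ^+ 2 := sqr_ge0 _.
have k5 : 0 <= (w1 + w2) ^+ 2 := sqr_ge0 _.
have k6 : 0 <= (`|s| - 1) ^+ 2 := sqr_ge0 _.
rewrite /s in ns2 gg g3 k6. nra.
Qed.

Local Open Scope ereal_scope.

Theorem lemma3 (R : realType) (eps K : R) (heps : (0 < eps)%R) (hK : (0 < K)%R) :
  exists C : R,
    forall (d : measure_display) (T : measurableType d) (P : probability T R)
           (W1 W2 : {RV P >-> R}),
      'E_P[fun w => (`|W1 w| ^+ 2 + `|W2 w| ^+ 2)%R] <= K%:E ->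
      forall x : R, (1 <= x)%R ->
        'E_P[fun w => (ln (x * expR (W1 w) + expR (W2 w)) ^+ 2)%R]
          <= ((ln x) ^+ 2)%:E + 2%:E * (eps%:E + 'E_P[W1]) * (ln x)%:E + C%:E.
Proof.
exists (6 + 22 * K)%R => d T P W1 W2 hE x x1.
have a0 : (0 <= ln x)%R := ln_ge0 x1.
have xa : x = expR (ln x) by rewrite lnK // posrE; lra.
set a := ln x in a0 xa *.
set Q := fun w => (`|W1 w| ^+ 2 + `|W2 w| ^+ 2)%R in hE *.
have mW1 : measurable_fun setT W1 by [].
have mW2 : measurable_fun setT W2 by [].
have mQ : measurable_fun setT Q.
  by apply: measurable_funD; apply: measurable_funX; apply: measurableT_comp.
have Q0 : forall w, (0 <= Q w)%R.
  by move=> w; rewrite /Q; apply: addr_ge0; apply: sqr_ge0.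
have QL : Q \in Lfun P 1.
  apply/Lfun1_integrable/integrableP; split; first exact/measurable_EFinP.
  move: hE; rewrite unlock => hE.
  rewrite (eq_integral (fun w => (Q w)%:E)); last by move=> w _ /=; rewrite ger0_norm ?Q0.
  by apply: le_lt_trans hE _; rewrite ltry.
have W1L : (W1 : T -> R) \in Lfun P 1.
  have iL : ((cst 1 \+ Q)%R : T -> R) \in Lfun P 1 by rewrite rpredD // Lfun_cst.
  apply/Lfun1_integrable.
  apply: (le_integrable measurableT _ _ ((Lfun1_integrable _ _).1 iL)).
  - exact/measurable_EFinP.
  - move=> w _ /=; rewrite lee_fin /Q.

  have := Q0 w; rewrite /Q => q0.
  rewrite [X in (_ <= X)%R]ger0_norm; last by lra.
  have := sqr_ge0 (`|W1 w| - 1)%R; have := sqr_ge0 (`|W2 w|)%R. nra.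
pose hb := (cst (a ^+ 2 + 6)%R \+ ((2 * a)%R \o* W1 \+ 22%R \o* Q))%R.
apply: (@le_trans _ _ 'E_P[hb]).
  rewrite !unlock; apply: ge0_le_integral => //.
  - by move=> w _; rewrite lee_fin sqr_ge0.
  - apply/measurable_EFinP; apply: measurable_funX.
    apply: measurableT_comp; first exact: measurable_ln.
    apply: measurable_funD; last exact: measurableT_comp.
    apply: measurable_funM => //; exact: measurableT_comp.
  - apply/measurable_EFinP; apply: measurable_funD => //.
    apply: measurable_funD; apply: measurable_funM => //.
  - move=> w _; rewrite lee_fin /hb /= xa.
    have := @pw R a (W1 w) (W2 w) a0; rewrite /Q; lra.
have S1 : ((2 * a)%R \o* W1) \in Lfun P 1 by apply: Lfun_scale.
have S2 : (22%R \o* Q) \in Lfun P 1 by apply: Lfun_scale.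
rewrite /hb (@expectationD _ _ _ P (cst (a ^+ 2 + 6)%R) ((2 * a)%R \o* W1 \+ 22%R \o* Q)%R); [|by rewrite Lfun_cst|by rewrite rpredD].
rewrite (@expectationD _ _ _ P ((2 * a)%R \o* W1) (22%R \o* Q)) // expectationZl // expectationZl // expectation_cst.
have fW := expectation_fin_num W1L; have fQ := expectation_fin_num QL.
have hq : (fine 'E_P[Q] <= K)%R by rewrite -lee_fin fineK.
rewrite -(fineK fW) -(fineK fQ).
move: hq; set w := fine _; set q := fine _ => hq.
rewrite -!EFinM -!EFinD lee_fin.
have := mulr_ge0 (ltW heps) a0; nra.
Qed.
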